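(* Let $N\ge 2$ be an integer and $\tau>0$. For $t\in\{0,\tau,2\tau,\dots\}$ let $u_j^t=u(j,t)$, $j=0,\dots,N$, be defined by prescribed initial values $u(j,0)$, the Dirichlet boundary condition $u_0^t=u_N^t=0$ for all $t$, and the iteration, for $j=1,\dots,N-1$, $$u_j^{t+\tau}=u_j^t+\frac{u_j^tu_{j-1}^t}{2}\bigl(u_j^t+u_{j-1}^t-1\bigr)\bigl(u_{j-1}^t-u_j^t\bigr)+\frac{u_j^tu_{j+1}^t}{2}\bigl(u_j^t+u_{j+1}^t-1\bigr)\bigl(u_{j+1}^t-u_j^t\bigr).$$ Suppose $$\tfrac12\le u(1,0)\le u(2,0)\le\cdots\le u(N-1,0)\le 1.$$ Then for all $t\in\{\tau,2\tau,\dots\}$, $$\tfrac12\le u(1,t)\le u(2,t)\le\cdots\le u(N-1,t)\le 1.$$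
   Context: Aggregation–diffusion lattice model on the grid points $x_j=j/N$ with time step $\tau$. *)

(* Defs.v *)
From mathcomp Require Import all_boot all_order all_algebra.
From mathcomp Require Import reals.
Set Implicit Arguments. Unset Strict Implicit. Unset Printing Implicit Defensive.
Import Order.TTheory GRing.Theory Num.Theory.
Local Open Scope ring_scope.

Definition lattice_step (R : realType) (v : nat -> R) (j : nat) : R :=
  v j
  + v j * v j.-1 / 2 * (v j + v j.-1 - 1) * (v j.-1 - v j)
  + v j * v j.+1 / 2 * (v j + v j.+1 - 1) * (v j.+1 - v j).

Definition ordered_profile (R : realType) (N : nat) (v : nat -> R) : Prop :=
  [/\ 1 / 2 <= v 1%N,
      (forall j : nat, (1 <= j)%N -> (j < N.-1)%N -> v j <= v j.+1)
    & v N.-1 <= 1].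

(* Main.v *)
Require Import Defs.
From mathcomp Require Import all_boot all_order all_algebra.
From mathcomp Require Import reals.
From mathcomp Require Import ring lra zify.
Import Order.TTheory GRing.Theory Num.Theory.
Local Open Scope ring_scope.

Section Aux.
Variable R : realType.

Definition FF (x y : R) := x * y * (x + y - 1) * (y - x) / 2.

Lemma FF0l y : FF 0 y = 0. Proof. by rewrite /FF !mul0r. Qed.
Lemma FF0r x : FF x 0 = 0. Proof. by rewrite /FF mulr0 !mul0r. Qed.

Lemma FF_ge0 x y : 1/2 <= x -> x <= y -> y <= 1 -> 0 <= FF x y.
Proof.
move=> h1 h2 h3; rewrite /FF; apply: divr_ge0; last by [].
apply: mulr_ge0; last lra.
apply: mulr_ge0; last lra.
apply: mulr_ge0; lra.
Qed.

Lemma FF_le x y : 1/2 <= x -> x <= y -> y <= 1 -> FF x y <= (y - x) / 2.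
Proof.
move=> h1 h2 h3; rewrite /FF.
have hx : 0 <= x by lra.
have hy : 0 <= y by lra.
have hs : 0 <= x + y - 1 by lra.
have P0 : 0 <= x * y by apply: mulr_ge0.
have P1 : x * y <= 1.
  have : x * y <= 1 * 1 by apply: ler_pM; lra.
  by rewrite mulr1.
have Q0 : 0 <= x * y * (x + y - 1) by apply: mulr_ge0.
have Q1 : x * y * (x + y - 1) <= 1.
  have : x * y * (x + y - 1) <= 1 * 1 by apply: ler_pM; lra.
  by rewrite mulr1.
have : 0 <= (1 - x * y * (x + y - 1)) * (y - x) by apply: mulr_ge0; lra.
lra.
Qed.

Lemma step_FF (v : nat -> R) j :
  lattice_step v j = v j - FF (v j.-1) (v j) + FF (v j) (v j.+1).
Proof. rewrite /lattice_step /FF; ring. Qed.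

Lemma chain N (v : nat -> R) :
  (forall j : nat, (1 <= j)%N -> (j < N.-1)%N -> v j <= v j.+1) ->
  forall d i, (1 <= i)%N -> (i + d <= N.-1)%N -> v i <= v (i + d)%N.
Proof.
move=> H; elim=> [|d IH] i h1 h2; first by rewrite addn0.
rewrite addnS; apply: le_trans (IH i h1 _) _; first by lia.
apply: H; lia.
Qed.

Lemma step_profile N (v : nat -> R) : (2 <= N)%N -> v 0%N = 0 -> v N = 0 ->
  ordered_profile N v -> ordered_profile N (lattice_step v).
Proof.
move=> hN h0 hNN [p1 pm pN].
have ch := @chain N v pm.
have bnd : forall j, (1 <= j)%N -> (j <= N.-1)%N -> 1/2 <= v j /\ v j <= 1.
  move=> j h1 h2; split.
    apply: le_trans p1 _; have := ch (j - 1)%N 1%N (leqnn 1) ltac:(lia).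
    by have -> : (1 + (j - 1) = j)%N by lia.
  apply: le_trans _ pN; have := ch (N.-1 - j)%N j h1 ltac:(lia).
  by have -> : (j + (N.-1 - j) = N.-1)%N by lia.
have left : forall j, (1 <= j)%N -> (j <= N.-1)%N ->
    0 <= FF (v j.-1) (v j) /\ FF (v j.-1) (v j) <= (v j - 1/2) / 2.
  move=> j h1 h2; have [b1 b2] := bnd j h1 h2.
  case: (eqVneq j 1%N) => [->|nj]; first by rewrite /= h0 FF0l; lra.
  have [a1 a2] := bnd j.-1 ltac:(lia) ltac:(lia).
  have am : v j.-1 <= v j.
    have := pm j.-1 ltac:(lia) ltac:(lia). by have -> : (j.-1.+1 = j)%N by lia.
  split; first exact: FF_ge0.
  have := @FF_le _ _ a1 am b2; lra.
have right : forall j, (1 <= j)%N -> (j <= N.-1)%N ->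
    0 <= FF (v j) (v j.+1) /\ FF (v j) (v j.+1) <= (1 - v j) / 2.
  move=> j h1 h2; have [b1 b2] := bnd j h1 h2.
  case: (eqVneq j N.-1) => [->|nj].
    have -> : (N.-1.+1 = N)%N by lia.
    rewrite hNN FF0r; lra.
  have [c1 c2] := bnd j.+1 ltac:(lia) ltac:(lia).
  have cm : v j <= v j.+1 by apply: pm; lia.
  split; first exact: FF_ge0.
  have := @FF_le _ _ b1 cm c2; lra.
have rightm : forall j, (1 <= j)%N -> (j < N.-1)%N ->
    FF (v j) (v j.+1) <= (v j.+1 - v j) / 2.
  move=> j h1 h2; have [b1 b2] := bnd j h1 ltac:(lia).
  have [c1 c2] := bnd j.+1 ltac:(lia) ltac:(lia).
  have cm : v j <= v j.+1 by apply: pm; lia.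
  exact: FF_le.
split.
- rewrite step_FF; have [l1 l2] := left 1%N (leqnn 1) ltac:(lia).
  have [r1 r2] := right 1%N (leqnn 1) ltac:(lia).
  have [b1 b2] := bnd 1%N (leqnn 1) ltac:(lia). lra.
- move=> j h1 h2; rewrite !step_FF.
  have [l1 l2] := left j h1 ltac:(lia).
  have [r1 r2] := right j h1 ltac:(lia).
  have [l1' l2'] := left j.+1 ltac:(lia) ltac:(lia).
  have [r1' r2'] := right j.+1 ltac:(lia) ltac:(lia).
  have rm := rightm j h1 h2.
  have -> : (j.+1.-1 = j)%N by [].
  lra.
- rewrite step_FF; have [l1 l2] := left N.-1 ltac:(lia) (leqnn _).
  have [r1 r2] := right N.-1 ltac:(lia) (leqnn _).
  have [b1 b2] := bnd N.-1 ltac:(lia) (leqnn _). lra.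
Qed.

Lemma profile_ext N (v w : nat -> R) : (2 <= N)%N ->
  (forall j, (1 <= j)%N -> (j <= N.-1)%N -> v j = w j) ->
  ordered_profile N v -> ordered_profile N w.
Proof.
move=> hN E [p1 pm pN]; split.
- by rewrite -E //; lia.
- move=> j h1 h2; rewrite -!E //; try lia; exact: pm.
- by rewrite -E //; lia.
Qed.

End Aux.

Theorem theorem3p4 (R : realType) (N : nat) (tau : R) (u : nat -> R -> R) :
  (2 <= N)%N -> 0 < tau ->
  (forall k : nat, u 0%N (k%:R * tau) = 0 /\ u N (k%:R * tau) = 0) ->
  (forall (k j : nat), (1 <= j)%N -> (j <= N.-1)%N ->
     u j (k.+1%:R * tau) = lattice_step (fun i => u i (k%:R * tau)) j) ->
  ordered_profile N (fun j => u j 0) ->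
  forall k : nat, (1 <= k)%N -> ordered_profile N (fun j => u j (k%:R * tau)).
Proof.
move=> hN _ hb hs h0.
suff H : forall k, ordered_profile N (fun j => u j (k%:R * tau)) by move=> k _; apply: H.
elim=> [|k IH]; first by rewrite mul0r.
apply: (@profile_ext R N (lattice_step (fun i => u i (k%:R * tau))) _ hN).
  by move=> j h1 h2; rewrite hs.
have [b0 bN] := hb k.
exact: step_profile.
Qed.
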